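(* If $X$ is a closed permutation class with $\mathrm{al}(X)=\infty$, then $|X\cap S_n|\ge 2^{n-1}$ for every $n\in\mathbf{N}$.
   Context: $S_n$ is the set of permutations of $[n]$, $S=\bigcup_n S_n$. $\pi\prec\rho$ means $\rho$ (as a sequence) has a subsequence order-isomorphic to $\pi$ (i.e. with the same relative order of entries). A closed permutation class is a set $X\subset S$ closed downward under $\prec$. A permutation $\sigma$ is alternating if every value of $\sigma$ at an odd position is larger than every value of $\sigma$ at an even position, i.e. $\sigma(\{1,3,5,\dots\})>\sigma(\{2,4,6,\dots\})$. For $\pi\in S$, $\mathrm{al}(\pi)$ is the maximum length of an alternating permutation $\sigma$ with $\sigma\prec\pi$ or $\sigma\prec\pi^{-1}$, and for $X\subset S$, $\mathrm{al}(X)=\sup\{\mathrm{al}(\pi):\pi\in X\}$. *)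

(* Defs.v *)
(* Permutations of [n] are 'S_n = {perm 'I_n}
   (positions and values 0-based). *)
From mathcomp Require Import all_boot all_order all_fingroup.
Set Implicit Arguments. Unset Strict Implicit. Unset Printing Implicit Defensive.

Definition contains m n (pi : 'S_m) (rho : 'S_n) : bool :=
  [exists f : {ffun 'I_m -> 'I_n},
    [forall i : 'I_m, forall j : 'I_m,
      ((i < j) ==> (f i < f j)) &&
      ((pi i < pi j) == (rho (f i) < rho (f j)))]].

(* Alternating: every value at an odd (1-based) position, i.e. an even
   0-based index, exceeds every value at an even (1-based) position. *)
Definition alternating k (sigma : 'S_k) : bool :=
  [forall i : 'I_k, forall j : 'I_k,
     (~~ odd i && odd j) ==> (sigma j < sigma i)].

(* al(pi): maximum length of an alternating sigma with sigma ≺ pi or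
   sigma ≺ pi^-1 (such sigma has length at most n; the empty
   permutation is always alternating and contained). *)
Definition al n (pi : 'S_n) : nat :=
  \max_(k < n.+1 | [exists sigma : 'S_k,
        alternating sigma && (contains sigma pi || contains sigma pi^-1)]) k.

(* A class X is given by its slices X n = X ∩ S_n. *)
Definition closed_class (X : forall n, {set 'S_n}) : Prop :=
  forall m n (pi : 'S_m) (rho : 'S_n),
    contains pi rho -> rho \in X n -> pi \in X m.

Definition al_infinite (X : forall n, {set 'S_n}) : Prop :=
  forall k, exists n (pi : 'S_n), pi \in X n /\ k <= al pi.

(* Main.v *)
Require Import Defs.
From mathcomp Require Import all_boot all_order all_fingroup.
From mathcomp Require Import zify.
Set Implicit Arguments. Unset Strict Implicit. Unset Printing Implicit Defensive.

Definition R (d : bool) (key : nat -> nat) : rel nat :=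
  fun x y => if d then key x < key y else key y < key x.

Lemma R_trans (d : bool) (key : nat -> nat) : transitive (R d key).
Proof. by case: d => y x z /=; rewrite /R /=; [move=> *; apply: ltn_trans; eauto | move=> h1 h2; apply: ltn_trans h2 h1]. Qed.

Lemma ES key s a b : uniq s -> {in s &, injective key} -> 2 ^ (a + b) <= size s ->
  exists2 t, subseq t s &
    (a <= size t /\ sorted (R true key) t) \/ (b <= size t /\ sorted (R false key) t).
Proof.
have [k] := ubnP (size s); elim: k s a b => // k IH [|x s'] a b /= Hk Hu Hi Hs.
  by move: Hs; rewrite leqn0 expn_eq0.
case: a Hs => [|a] Hs; first by exists [::]; last left.
case: b Hs => [|b] Hs; first by exists [::]; last right.
case/andP: Hu => xs' Hu.
set s1 := filter (fun y => key x < key y) s'.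
set s2 := filter (fun y => key y < key x) s'.
have Hsz : size s1 + size s2 = size s'.
  rewrite !size_filter -(count_predC (fun y => key x < key y)); congr (_ + _).
  apply: eq_in_count => y ys /=.
  case: ltngtP => // E; exfalso.
  have ys2 : y \in x :: s' by rewrite in_cons ys orbT.
  have exy := Hi x y (mem_head _ _) ys2 (esym E).
  by move: xs'; rewrite exy ys.
have Hi' : {in s' &, injective key}.
  by move=> u v us vs; apply: Hi; rewrite in_cons ?us ?vs orbT.
have E1 : a.+1 + b.+1 = (a + b.+1).+1 by rewrite addSn.
have E2 : a.+1 + b = a + b.+1 by rewrite addSnnS.
rewrite E1 expnS in Hs.
have [h1|h1] := leqP (2 ^ (a + b.+1)) (size s1).
  have P1 : size s1 < k.
  by rewrite size_filter; apply: leq_ltn_trans (count_size _ _) _; rewrite -ltnS.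
have P2 : uniq s1 by exact: filter_uniq.
have P3 : {in s1 &, injective key}.
  by move=> u v us vs; apply: Hi'; apply: (mem_subseq (filter_subseq _ _)); eauto.
have [t ts [[ht st]|[ht st]]] := IH s1 a b.+1 P1 P2 P3 h1.
  - exists (x :: t); first by rewrite /= eqxx (subseq_trans ts (filter_subseq _ _)).
    left; split; first by [].
    rewrite /= (path_sortedE (@R_trans true key)) st andbT.
    apply/allP => y /(mem_subseq ts); rewrite mem_filter => /andP[].
    by rewrite /R.
  - exists t; last by right.
    exact: (subseq_trans ts (subseq_trans (filter_subseq _ _) (subseq_cons _ _))).
have h2 : 2 ^ (a.+1 + b) <= size s2.
  rewrite E2; move: Hs h1 Hsz; clearbody s1 s2; move: (size s1) (size s2) (size s') (2 ^ (a + b.+1)) => x1 x2 x3 e; lia.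
have P1 : size s2 < k.
  by rewrite size_filter; apply: leq_ltn_trans (count_size _ _) _; rewrite -ltnS.
have P2 : uniq s2 by exact: filter_uniq.
have P3 : {in s2 &, injective key}.
  by move=> u v us vs; apply: Hi'; apply: (mem_subseq (filter_subseq _ _)); eauto.
have [t ts [[ht st]|[ht st]]] := IH s2 a.+1 b P1 P2 P3 h2.
- exists t; last by left.
  exact: (subseq_trans ts (subseq_trans (filter_subseq _ _) (subseq_cons _ _))).
- exists (x :: t); first by rewrite /= eqxx (subseq_trans ts (filter_subseq _ _)).
  right; split; first by [].
  rewrite /= (path_sortedE (@R_trans false key)) st andbT.
  apply/allP => y /(mem_subseq ts); rewrite mem_filter => /andP[].
  by rewrite /R.
Qed.

Definition cmp (d : bool) (i j : nat) := if d then i < j else j < i.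

Section Rank.
Variables (n : nat) (lt : rel 'I_n).
Hypothesis irr : irreflexive lt.
Definition rk i := #|[set j | lt j i]|.
Lemma rk_bound i : rk i < n.
Proof.
rewrite -[n in _ < n]card_ord -cardsT; apply: proper_card; apply/properP; split.
  exact: subsetT.
by exists i; rewrite !inE ?irr.
Qed.
Hypothesis tr : transitive lt.
Lemma rk_lt i j : lt i j -> rk i < rk j.
Proof.
move=> h; apply: proper_card; apply/properP; split.
  by apply/subsetP => k; rewrite !inE => hk; exact: tr hk h.
by exists i; rewrite !inE ?h ?irr.
Qed.
Hypothesis tot : forall i j, i != j -> lt i j || lt j i.
Lemma rk_ltE i j : (rk i < rk j) = lt i j.
Proof.
case: (boolP (lt i j)) => h; first exact: rk_lt.
case: (eqVneq i j) => [->|ne]; first by rewrite ltnn.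
have := tot ne; rewrite (negbTE h) /= => /rk_lt h2.
by apply/negbTE; rewrite -leqNgt ltnW.
Qed.
Lemma rk_inj : injective rk.
Proof.
move=> i j e; apply/eqP; apply/negPn/negP => ne.
by have := tot ne; rewrite -!rk_ltE e ltnn.
Qed.
End Rank.

Section LtS.
Variables (n : nat) (S : {set 'I_n}) (d1 d2 : bool).
Definition ltS : rel 'I_n := fun i j =>
  if i \in S then (j \in S) && cmp d1 i j else (j \in S) || cmp d2 i j.
Lemma ltS_irr : irreflexive ltS.
Proof. by move=> i; rewrite /ltS /cmp; case: (i \in S); case: d1; case: d2; rewrite /= ltnn. Qed.
Lemma ltS_trans : transitive ltS.
Proof.
move=> y x z; rewrite /ltS /cmp.
case: (x \in S); case: (y \in S); case: (z \in S); case: d1; case: d2 => //=; lia.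
Qed.
Lemma ltS_tot i j : i != j -> ltS i j || ltS j i.
Proof.
move=> /eqP ne; have {}ne : (i : nat) <> j by move=> /val_inj.
rewrite /ltS /cmp.
case: (i \in S); case: (j \in S); case: d1; case: d2 => //=; lia.
Qed.
Definition rkS i : 'I_n := Ordinal (rk_bound ltS_irr i).
Lemma rkS_inj : injective rkS.
Proof. move=> i j /(congr1 val) /= e; exact: (rk_inj ltS_irr ltS_trans ltS_tot e). Qed.
Definition piS : 'S_n := perm rkS_inj.
Lemma piS_lt i j : (piS i < piS j) = ltS i j.
Proof. by rewrite !permE /= (rk_ltE ltS_irr ltS_trans ltS_tot). Qed.
Lemma piS_val i : val (piS i) = rk ltS i.
Proof. by rewrite permE. Qed.
Lemma mem_rk i : (i \in S) = (#|~: S| <= rk ltS i).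
Proof.
case: (boolP (i \in S)) => iS.
  apply/esym; apply: subset_leq_card; apply/subsetP => j; rewrite !inE /ltS => /negbTE ->.
  by rewrite iS.
apply/esym/negbTE; rewrite -ltnNge; apply: proper_card; apply/properP; split.
  apply/subsetP => j; rewrite !inE /ltS; case: (j \in S) => //.
  by rewrite (negbTE iS).
by exists i; rewrite !inE ?iS /= ?ltS_irr.
Qed.
End LtS.

Definition anchor n (d : bool) : 'I_n.+1 := if d then ord0 else ord_max.

Lemma rk_anchor n (S : {set 'I_n.+1}) d1 d2 : anchor n d1 \in S ->
  rk (ltS S d1 d2) (anchor n d1) = #|~: S|.
Proof.
move=> aS; rewrite /rk; apply: eq_card => j; rewrite !inE /ltS aS /=.
case: (j \in S) => //=; rewrite /cmp /anchor; case: (d1) => /=; first by rewrite ltn0.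
by rewrite ltnNge -ltnS ltn_ord.
Qed.

Lemma piS_inj n d1 d2 (S S' : {set 'I_n.+1}) :
  anchor n d1 \in S -> anchor n d1 \in S' -> piS S d1 d2 = piS S' d1 d2 -> S = S'.
Proof.
move=> aS aS' e.
have h i : rk (ltS S d1 d2) i = rk (ltS S' d1 d2) i by rewrite -!piS_val e.
have c : #|~: S| = #|~: S'| by rewrite -(rk_anchor d2 aS) -(rk_anchor d2 aS') h.
by apply/setP => i; rewrite (mem_rk S d1 d2) (mem_rk S' d1 d2) c h.
Qed.

Lemma Rnth d key t i j : sorted (R d key) t -> i < size t -> j < size t ->
  (key (nth 0 t i) < key (nth 0 t j)) = cmp d i j.
Proof.
move=> st hi hj; have H := sorted_ltn_nth (@R_trans d key) 0 st.
rewrite /cmp; case: (ltngtP i j) => h.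
- have := H i j hi hj h; rewrite /R; case: (d) => // h2.
  by rewrite ltnNge (ltnW h2).
- have := H j i hj hi h; rewrite /R; case: (d) => // h2.
  by rewrite ltnNge (ltnW h2).
- by subst; rewrite ltnn; case: (d).
Qed.

Lemma contains_trans m n p (a : 'S_m) (b : 'S_n) (c : 'S_p) :
  contains a b -> contains b c -> contains a c.
Proof.
move=> /existsP[f /forallP Hf] /existsP[g /forallP Hg].
apply/existsP; exists [ffun i => g (f i)]; apply/forallP => i; apply/forallP => j.
rewrite !ffunE.
have /forallP/(_ j)/andP[h1 /eqP h2] := Hf i.
have /forallP/(_ (f j))/andP[h3 /eqP h4] := Hg (f i).
apply/andP; split; last by rewrite h2 h4.
by apply/implyP => ij; exact: (implyP h3) ((implyP h1) ij).
Qed.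

Lemma contains_inv m n (a : 'S_m) (b : 'S_n) : contains a b -> contains (a^-1)%g (b^-1)%g.
Proof.
move=> /existsP[f /forallP Hf].
apply/existsP; exists [ffun v => b (f ((a^-1)%g v))]; apply/forallP => v; apply/forallP => w.
rewrite !ffunE.
have [i ->] : exists i, v = a i by exists ((a^-1)%g v); rewrite permKV.
have [j ->] : exists j, w = a j by exists ((a^-1)%g w); rewrite permKV.
rewrite !permK.
have /forallP/(_ j)/andP[h1 /eqP h2] := Hf i.
apply/andP; split; first by rewrite h2; apply/implyP.
case: (ltngtP i j) => h.
- by rewrite (implyP h1 h).
- have /forallP/(_ i)/andP[h3 _] := Hf j.
  by rewrite ltnNge (ltnW (implyP h3 h)).
- have e : i = j by exact: val_inj.
  by rewrite e !ltnn.
Qed.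

Lemma contain_piS N' (sig : 'S_N'.+1) (t : seq nat) n d1 d2 (S : {set 'I_n}) :
  alternating sig ->
  (forall p, p \in t -> (2 * p).+1 <= N') ->
  sorted ltn t ->
  sorted (R d1 (fun p => nat_of_ord (sig (inord (2 * p))))) t ->
  sorted (R d2 (fun p => nat_of_ord (sig (inord (2 * p).+1)))) t ->
  n <= size t -> contains (piS S d1 d2) sig.
Proof.
move=> alt tb tlt s1 s2 nt.
have alt' q r : ~~ odd q -> odd r -> q <= N' -> r <= N' ->
    nat_of_ord (sig (inord r)) < nat_of_ord (sig (inord q)).
  move=> oq or_ hq hr.
  have /forallP/(_ (inord r))/implyP := forallP alt (inord q).
  by rewrite !inordK ?ltnS // oq or_ => /(_ isT).
apply/existsP.
exists [ffun i : 'I_n => (inord (2 * nth 0 t i + (i \notin S)) : 'I_N'.+1)].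
apply/forallP => i; apply/forallP => j; rewrite !ffunE piS_lt.
have hi : i < size t by apply: leq_trans (ltn_ord i) nt.
have hj : j < size t by apply: leq_trans (ltn_ord j) nt.
have bi : (2 * nth 0 t i).+1 <= N' := tb _ (mem_nth 0 hi).
have bj : (2 * nth 0 t j).+1 <= N' := tb _ (mem_nth 0 hj).
have ij_lt : i < j -> nth 0 t i < nth 0 t j.
  move=> ij; have := sorted_ltn_nth ltn_trans 0 tlt; move=> H; exact: H.
apply/andP; split.
  apply/implyP => ij; have := ij_lt ij.
  rewrite !inordK; move: (i \notin S) (j \notin S) => [] [] /=; lia.
rewrite /ltS.
case iS: (i \in S); case jS: (j \in S) => /=.
- rewrite !addn0; move: (Rnth s1 hi hj) => /= ->; exact: eqxx.
- rewrite addn0 addn1 eq_sym; apply/eqP/negbTE; rewrite -leqNgt ltnW //.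
  refine (alt' _ _ _ _ _ _); rewrite ?oddS ?oddM //=; lia.
- rewrite addn0 addn1 eq_sym eqb_id.
  refine (alt' _ _ _ _ _ _); rewrite ?oddS ?oddM //=; lia.
- rewrite !addn1; move: (Rnth s2 hi hj) => /= ->; exact: eqxx.
Qed.

Lemma extract_al m (pi : 'S_m) K : 0 < K -> K <= al pi ->
  exists L (sg : 'S_L), [/\ K <= L, alternating sg &
     (contains sg pi || contains sg (pi^-1)%g)].
Proof.
move=> K0 alK.
case: (boolP [exists k : 'I_m.+1, (K <= k) && [exists sigma : 'S_k,
        alternating sigma && (contains sigma pi || contains sigma (pi^-1)%g)]]).
  move=> /existsP[k /andP[Kk /existsP[sg /andP[a c]]]].
  by exists k, sg.
rewrite negb_exists => /forallP H; exfalso.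
have : al pi <= K.-1.
  apply/bigmax_leqP => k Pk; have := H k; rewrite Pk andbT -ltnNge.
  by move=> h; rewrite -ltnS (ltn_predK K0).
by move: alK; case: (K) K0 => // K' _ /=; lia.
Qed.

Lemma half_bound L' p : p < (L'.+1)./2 -> (2 * p).+1 <= L'.
Proof.
move=> hp; have := odd_double_half L'.+1; rewrite -mul2n.
move: hp; move: (L'.+1)./2 (odd L'.+1) => h [] /=; lia.
Qed.

Theorem mainTheorem2 (X : forall n, {set 'S_n}) :
  closed_class X -> al_infinite X ->
  forall n : nat, 2 ^ n.-1 <= #|X n|.
Proof.
move=> cl ali [|n'].
  have [m [pi [piX _]]] := ali 0.
  have c : contains (1 : 'S_0) pi.
    apply/existsP; exists [ffun i : 'I_0 => widen_ord (leq0n m) i].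
    by apply/forallP => -[].
  have h := cl _ _ _ _ c piX.
  by apply/card_gt0P; exists 1%g.
set n := n'.+1.
set M := 2 ^ (n + n).
set K := (2 ^ (M + M)).*2.
have K0 : 0 < K by rewrite /K double_gt0 expn_gt0.
have [m [pi [piX alK]]] := ali K.
have [L [sig [KL altS cS]]] := extract_al K0 alK.
case: L sig KL altS cS => [|L'] sig KL altS cS; first by move: K0; rewrite leqn0 in KL; rewrite (eqP KL).
set ktop := fun p => nat_of_ord (sig (inord (2 * p))).
set kbot := fun p => nat_of_ord (sig (inord (2 * p).+1)).
set s0 := iota 0 (L'.+1)./2.
have s0b p : p \in s0 -> (2 * p).+1 <= L'.
  by rewrite mem_iota add0n => /andP[_ /half_bound].
have inj1 : {in s0 &, injective ktop}.
  move=> p q /s0b hp /s0b hq /val_inj /perm_inj /(congr1 val).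
  rewrite /= !inordK; lia.
have inj2 : {in s0 &, injective kbot}.
  move=> p q /s0b hp /s0b hq /val_inj /perm_inj /(congr1 val).
  rewrite /= !inordK; lia.
have sz0 : 2 ^ (M + M) <= size s0.
  by rewrite size_iota -{1}(doubleK (2 ^ (M + M))); apply: half_leq.
have [t1 t1s H1] := ES (iota_uniq 0 _) inj1 sz0.
have [d1 [sz1 st1]] : exists d1, M <= size t1 /\ sorted (R d1 ktop) t1.
  by case: H1 => [[? ?]|[? ?]]; [exists true | exists false].
have u1 : uniq t1 := subseq_uniq t1s (iota_uniq _ _).
have inj2' : {in t1 &, injective kbot}.
  by move=> p q hp hq; apply: inj2; apply: (mem_subseq t1s).
have [t2 t2s H2] := ES u1 inj2' sz1.
have [d2 [sz2 st2]] : exists d2, n <= size t2 /\ sorted (R d2 kbot) t2.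
  by case: H2 => [[? ?]|[? ?]]; [exists true | exists false].
have t20 : subseq t2 s0 := subseq_trans t2s t1s.
have tb : forall p, p \in t2 -> (2 * p).+1 <= L'.
  by move=> p /(mem_subseq t20) /s0b.
have tlt : sorted ltn t2 := subseq_sorted ltn_trans t20 (iota_ltn_sorted _ _).
have st1' : sorted (R d1 ktop) t2 := subseq_sorted (@R_trans d1 ktop) t2s st1.
have cont (S : {set 'I_n}) : contains (piS S d1 d2) sig.
  exact: (contain_piS S altS tb tlt st1' st2 sz2).
set a := anchor n' d1.
set h := fun T : {set 'I_n} =>
  if contains sig pi then piS (a |: T) d1 d2 else ((piS (a |: T) d1 d2)^-1)%g.
have hX T : h T \in X n.
  rewrite /h; case c: (contains sig pi).
    by apply: (cl _ _ _ _ _ piX); apply: contains_trans (cont _) c.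
  rewrite c /= in cS.
  apply: (cl _ _ _ _ _ piX); rewrite -[pi]invgK.
  by apply: contains_inv; apply: contains_trans (cont _) cS.
have hinj : {in powerset [set~ a] &, injective h}.
  move=> T T'; rewrite !inE => /subsetP sT /subsetP sT' e.
  have e' : piS (a |: T) d1 d2 = piS (a |: T') d1 d2.
    by move: e; rewrite /h; case: (contains sig pi) => //; apply: invg_inj.
  have aT : a \notin T by apply/negP => /sT; rewrite !inE eqxx.
  have aT' : a \notin T' by apply/negP => /sT'; rewrite !inE eqxx.
  have := piS_inj (setU11 _ _) (setU11 _ _) e' => E.
  by rewrite -(setU1K aT) -(setU1K aT') E.
have : #|h @: powerset [set~ a]| <= #|X n|.
  by apply: subset_leq_card; apply/subsetP => x /imsetP[T _ ->]; apply: hX.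
by rewrite (card_in_imset hinj) card_powerset cardsC1 card_ord.
Qed.
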